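(* Let $p$ be a prime and $n$ a positive integer with $p\geq n$. Then $$I_{p^n}=\Big(p,\prod_{i=0}^{p-1}(X-i)\Big)^n.$$ That is, the polynomials in $\mathbb{Z}[X]$ whose fixed divisor is divisible by $p^n$ are exactly the elements of the $n$-th power of the ideal generated by $p$ and $X(X-1)\cdots(X-(p-1))$.
   Context: $I_{p^n}=p^n\mathrm{Int}(\mathbb{Z})\cap\mathbb{Z}[X]=\{f\in\mathbb{Z}[X] : p^n\mid f(a)\text{ for all }a\in\mathbb{Z}\}$, where $\mathrm{Int}(\mathbb{Z})=\{f\in\mathbb{Q}[X]: f(\mathbb{Z})\subseteq\mathbb{Z}\}$. *)

(* Defs.v *)
From HB Require Import structures.
From mathcomp Require Import all_boot all_order all_algebra.
Set Implicit Arguments. Unset Strict Implicit. Unset Printing Implicit Defensive.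
Import Order.TTheory GRing.Theory Num.Theory.
Local Open Scope ring_scope.

Definition ideal_gen (R : comPzRingType) (S : R -> Prop) (f : R) : Prop :=
  exists s : seq (R * R),
    (forall x, x \in s -> S x.1) /\ f = \sum_(x <- s) x.2 * x.1.

Definition ideal_mul (R : comPzRingType) (I J : R -> Prop) : R -> Prop :=
  ideal_gen (fun c => exists a b, [/\ I a, J b & c = a * b]).

Fixpoint ideal_pow (R : comPzRingType) (I : R -> Prop) (n : nat) : R -> Prop :=
  match n with
  | 0 => fun _ => True
  | n'.+1 => ideal_mul (ideal_pow I n') I
  end.

Definition Ifix (m : nat) (f : {poly int}) : Prop :=
  forall a : int, ((m%:Z) %| f.[a])%Z.

(* Main.v *)
Require Import Defs.
From HB Require Import structures.
From mathcomp Require Import all_boot all_order all_algebra.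
Import Order.TTheory GRing.Theory Num.Theory.
Local Open Scope ring_scope.
From mathcomp Require Import ring.

Section Ideals.
Variable R : comPzRingType.
Implicit Types (S : R -> Prop).

Lemma gen_in S x : S x -> ideal_gen S x.
Proof. move=> Sx; exists [:: (x, 1)]; split.
  by move=> y; rewrite inE => /eqP ->.
by rewrite big_cons big_nil mul1r addr0.
Qed.

Lemma gen_0 S : ideal_gen S 0.
Proof. by exists [::]; split => //; rewrite big_nil. Qed.

Lemma gen_add S x y : ideal_gen S x -> ideal_gen S y -> ideal_gen S (x + y).
Proof.
move=> [s [Hs ->]] [t [Ht ->]]; exists (s ++ t); split; last by rewrite big_cat.
by move=> z; rewrite mem_cat => /orP [/Hs|/Ht].
Qed.

Lemma gen_mull S r x : ideal_gen S x -> ideal_gen S (r * x).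
Proof.
move=> [s [Hs ->]]; exists (map (fun z => (z.1, r * z.2)) s); split.
  by move=> z /mapP [w /Hs Hw ->].
by rewrite big_map mulr_sumr; apply: eq_bigr => z _; rewrite mulrA.
Qed.

Lemma pow_0 (I : R -> Prop) n : ideal_pow I n 0.
Proof. by case: n => //= n; apply: gen_0. Qed.

Lemma pow_add (I : R -> Prop) n x y :
  ideal_pow I n x -> ideal_pow I n y -> ideal_pow I n (x + y).
Proof. by case: n => //= n; apply: gen_add. Qed.

Lemma pow_mull (I : R -> Prop) n r x : ideal_pow I n x -> ideal_pow I n (r * x).
Proof. by case: n => //= n; apply: gen_mull. Qed.

Lemma pow_step (I : R -> Prop) n a b : ideal_pow I n a -> I b -> ideal_pow I n.+1 (a * b).
Proof. by move=> Ha Ib /=; apply: gen_in; exists a, b. Qed.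

Lemma pow_sum (I : R -> Prop) n m (F : nat -> R) :
  (forall i, (i < m)%N -> ideal_pow I n (F i)) -> ideal_pow I n (\sum_(i < m) F i).
Proof.
move=> H; elim/big_ind: _ => //; [exact: pow_0 | exact: pow_add | by move=> i _; apply: H].
Qed.
End Ideals.

Definition ff (k : nat) : {poly int} := \prod_(i < k) ('X - ((i : nat)%:Z)%:P).

Lemma ff_eval m k : (ff k).[m%:Z] = (m ^_ k)%:Z.
Proof.
elim: k => [|k IH]; first by rewrite /ff big_ord0 hornerC.
rewrite /ff big_ord_recr /= hornerM -/(ff k) IH hornerXsubC ffactnSr PoszM.
case: (leqP k m) => hk; first by rewrite subzn.
by rewrite ffact_small // mul0r.
Qed.

Lemma prod_dvd (p : nat) (b : int) : (0 < p)%N ->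
  (p%:Z %| \prod_(i < p) (b - (i : nat)%:Z))%Z.
Proof.
move=> p0.
have hp : (0 < p%:Z) by rewrite ltz_nat.
have hlt : (`|(b %% p)%Z| < p)%N.
  by rewrite -ltz_nat gez0_abs ?modz_ge0 ?ltz_pmod // gt_eqF.
rewrite (bigD1 (Ordinal hlt)) //=; apply: dvdz_mulr.
rewrite gez0_abs ?modz_ge0 ?gt_eqF //.
by rewrite {1}(divz_eq b p) addrK dvdz_mull.
Qed.

Lemma size_ff k : size (ff k) = k.+1.
Proof.
have e : size (index_enum 'I_k) = k by rewrite /index_enum unlock /= -enumT size_enum_ord.
by rewrite /ff size_prod_XsubC e.
Qed.

Lemma lead_ff k : (ff k)`_k = 1.
Proof.
have := monic_prod_XsubC (index_enum 'I_k) xpredT (fun i : 'I_k => ((i : nat)%:Z)).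
by move/monicP; rewrite /lead_coef -/(ff k) size_ff.
Qed.

Lemma expand N (f : {poly int}) : (size f <= N)%N ->
  exists d : nat -> int, f = \sum_(k < N) d k *: ff k.
Proof.
elim: N f => [|N IH] f hf.
  by exists (fun _ => 0); rewrite big_ord0; apply/eqP; rewrite -size_poly_eq0 -leqn0.
pose c := f`_N; pose g := f - c *: ff N.
have hg : (size g <= N)%N.
  apply/leq_sizeP => j hj; rewrite coefB coefZ.
  case: (ltngtP j N) => hjN; first by rewrite ltnNge hj in hjN.
    have h1 : f`_j = 0 by rewrite nth_default // (leq_trans hf).
    have h2 : (ff N)`_j = 0 by rewrite nth_default // size_ff.
    by rewrite h1 h2 mulr0 subr0.
  by rewrite hjN lead_ff mulr1 subrr.
have [d Hd] := IH g hg.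
exists (fun k => if k == N then c else d k).
rewrite big_ord_recr /= eqxx -[f](subrK (c *: ff N)) -/g Hd; congr (_ + _).
by apply: eq_bigr => i _; rewrite ltn_eqF.
Qed.

Lemma coef_dvd (q : nat) N (d : nat -> int) (f : {poly int}) :
  f = \sum_(k < N) d k *: ff k -> (forall a : int, (q%:Z %| f.[a])%Z) ->
  forall m, (m < N)%N -> (q%:Z %| (m`!)%:Z * d m)%Z.
Proof.
move=> Hf Ha; elim/ltn_ind => m IH hm.
have := Ha m%:Z; rewrite Hf horner_sum (bigD1 (Ordinal hm)) //=.
rewrite hornerZ ff_eval ffactnn mulrC rpredDr //.
apply: rpred_sum => k /= hk.
rewrite hornerZ ff_eval.
case: (ltngtP k m) => hkm.
- rewrite -bin_ffact PoszM mulrCA mulrC. apply: dvdz_mulr; rewrite mulrC; apply: IH => //; exact: ltn_trans hm.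
- by rewrite (ffact_small hkm) mulr0.
- by exfalso; move: hk; rewrite -val_eqE /= hkm eqxx.
Qed.

Lemma logfact p k : prime p -> (k < p * p)%N -> logn p k`! = (k %/ p)%N.
Proof.
move=> pp hk; rewrite logn_fact //.
have p0 : (0 < p)%N by exact: prime_gt0.
case: k hk => [|k] hk; first by rewrite big_geq ?div0n.
rewrite big_ltn // expn1 big_nat_cond big1 ?addn0 // => i /andP [/andP [hi _] _].
apply: divn_small; apply: (leq_trans hk).
by rewrite mulnn (leq_pexp2l p0).
Qed.

Lemma ff_split a k : (a <= k)%N -> exists g, ff k = ff a * g.
Proof.
move=> hak; rewrite -(subnKC hak).
exists (\prod_(i < k - a) ('X - (((a + i)%N)%:Z)%:P)).
by rewrite /ff big_split_ord.
Qed.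

Lemma ff_step p m : ff (p * m.+1) = ff (p * m) * \prod_(i < p) ('X - (((p * m + i)%N)%:Z)%:P).
Proof. by rewrite /ff mulnSr big_split_ord. Qed.

Definition J (p : nat) : {poly int} -> Prop :=
  ideal_gen (fun g : {poly int} => g = (p%:Z)%:P \/ g = ff p).

Lemma Ifix_gen m S f : (forall x, S x -> Ifix m x) -> ideal_gen S f -> Ifix m f.
Proof.
move=> HS [s [Hs ->]] a; rewrite horner_sum big_seq; apply: rpred_sum => x hx.
by rewrite hornerM; apply: dvdz_mull; apply: HS; apply: Hs.
Qed.

Lemma J_Ifix p g : (0 < p)%N -> J p g -> Ifix p g.
Proof.
move=> p0; apply: Ifix_gen => x [->|->] a; first by rewrite hornerC dvdzz.
rewrite /ff horner_prod.
under eq_bigr do rewrite hornerXsubC.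
exact: prod_dvd.
Qed.

Lemma pow_Ifix p n f : (0 < p)%N -> ideal_pow (J p) n f -> Ifix (p ^ n) f.
Proof.
move=> p0; elim: n f => [|n IH] f /=.
  by move=> _ a; rewrite expn0 dvd1z.
apply: Ifix_gen => x [a [b [Ha Hb ->]]] c.
rewrite hornerM expnSr PoszM; apply: dvdz_mul; first exact: IH.
exact: J_Ifix.
Qed.

Lemma pstep p j i x : ideal_pow (J p) j x ->
  ideal_pow (J p) (j + i) (((p%:Z)%:P) ^+ i * x).
Proof.
elim: i => [|i IH] Hx; first by rewrite addn0 expr0 mul1r.
rewrite addnS exprSr mulrAC; apply: pow_step; first exact: IH.
by apply: gen_in; left.
Qed.


Lemma polyC_natX (p k : nat) : ((p ^ k)%N%:Z)%:P = ((p%:Z)%:P) ^+ k :> {poly int}.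
Proof. by rewrite -rmorphXn /= -!natz natrX. Qed.

Lemma main_dir p n f : prime p -> (n <= p)%N ->
  (forall m, (m <= n)%N -> ideal_pow (J p) m (ff (p * m))) ->
  Ifix (p ^ n) f -> ideal_pow (J p) n f.
Proof.
move=> pp hnp HJ Hf.
have p0 := prime_gt0 pp.
have [d Hd] := @expand (size f) f (leqnn _).
have Hc := @coef_dvd (p ^ n) _ d f Hd Hf.
rewrite Hd; apply: (@pow_sum _ (J p) n (size f) (fun k => d k *: ff k)) => k hk.
rewrite -mul_polyC.
case: (leqP n (k %/ p)) => hnj.
  have [g ->] : exists g, ff k = ff (p * n) * g.
    by apply: ff_split; rewrite mulnC -leq_divRL.
  rewrite mulrA mulrAC; apply: pow_mull; exact: HJ.
set j := (k %/ p)%N in hnj *.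
have [g ->] : exists g, ff k = ff (p * j) * g.
  by apply: ff_split; rewrite mulnC leq_trunc_div.
have hdv : ((p ^ (n - j))%N%:Z %| d k)%Z.
  have := Hc k hk; rewrite !dvdzE /= abszM absz_nat.
  case: (d k =P 0) => [->|dnz]; first by rewrite dvdn0.
  move=> H; have hd0 : (0 < `|d k|)%N by rewrite absz_gt0; apply/eqP.
  rewrite pfactor_dvdn // ?muln_gt0 ?fact_gt0 // in H; rewrite pfactor_dvdn //.
  have hkp : (k < p * p)%N.
    by move: hnj; rewrite ltn_divLR // => /leq_trans; apply; rewrite leq_mul2r hnp orbT.
  rewrite lognM ?fact_gt0 // logfact // -/j in H.
  by rewrite leq_subLR.
rewrite -(divzK hdv) polyCM polyC_natX.
have -> : ((d k %/ (p ^ (n - j))%N%:Z)%Z)%:P * (p%:Z)%:P ^+ (n - j) * (ff (p * j) * g)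
   = ((d k %/ (p ^ (n - j))%N%:Z)%Z)%:P * g * ((p%:Z)%:P ^+ (n - j) * ff (p * j)) by ring.
apply: pow_mull.
have hjn : (j <= n)%N by exact: ltnW.
rewrite -{1}(subnKC hjn); apply: pstep; exact: HJ.
Qed.

Lemma gen_sub (R : comPzRingType) (S : R -> Prop) (I : R -> Prop) f :
  (forall x, S x -> ideal_gen I x) -> ideal_gen S f -> ideal_gen I f.
Proof.
move=> HS [s [Hs ->]]; elim: s Hs => [|x s IH] Hs; first by rewrite big_nil; apply: gen_0.
rewrite big_cons; apply: gen_add; first by apply: gen_mull; apply: HS; apply: Hs; rewrite inE eqxx.
by apply: IH => y hy; apply: Hs; rewrite inE hy orbT.
Qed.

Lemma pow1_sub p f : ideal_pow (J p) 1 f -> J p f.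
Proof.
apply: gen_sub => x [a [b [_ Hb ->]]]; exact: gen_mull.
Qed.

Lemma HJ1 p : forall m, (m <= 1)%N -> ideal_pow (J p) m (ff (p * m)).
Proof.
case=> [|[|//]] _ //=.
rewrite muln1 -[ff p]mul1r; apply: gen_in; exists 1, (ff p); split => //.
by apply: gen_in; right.
Qed.

Lemma B_in p m : prime p -> J p (\prod_(i < p) ('X - (((p * m + i)%N)%:Z)%:P)).
Proof.
move=> pp; apply: pow1_sub; apply: main_dir => //; first exact: prime_gt0.
  exact: HJ1.
move=> a; rewrite expn1 horner_prod.
under eq_bigr do rewrite hornerXsubC PoszD opprD addrA.
by apply: prod_dvd; exact: prime_gt0.
Qed.

Lemma HJall p : prime p -> forall m, ideal_pow (J p) m (ff (p * m)).
Proof.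
move=> pp; elim=> [|m IH] //=.
rewrite ff_step; apply: pow_step => //; exact: B_in.
Qed.

Theorem mainTheorem13 (p n : nat) (hp : prime p) (hn : (0 < n)%N) (hpn : (n <= p)%N)
  (f : {poly int}) :
  Ifix (p ^ n)%N f <->
  ideal_pow (ideal_gen (fun g : {poly int} =>
                g = (p%:Z)%:P \/ g = \prod_(i < p) ('X - ((i : nat)%:Z)%:P))) n f.
Proof.
split.
  by apply: main_dir => // m _; apply: HJall.
by apply: pow_Ifix; exact: prime_gt0.
Qed.
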